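(* Let $G$ be a connected graph. If $G_{\rm SR}\cong K_1+(aK_2\cup bK_1)$ where either $a\ge 1$ and $b\ge 0$, or $a=0$ and $b\ge 2$, then $O_{\rm SR}(G)=\mathcal{N}$.
   Context: All graphs are finite, simple and undirected; $d(x,y)$ is the shortest-path distance. $aK_2\cup bK_1$ is the disjoint union of $a$ copies of $K_2$ and $b$ isolated vertices; the join $X+Y$ is obtained from the disjoint union of $X$ and $Y$ by adding all edges between $V(X)$ and $V(Y)$. A set $S\subseteq V(G)$ is a strong resolving set of a connected graph $G$ if for all distinct $x,y\in V(G)$ there exists $z\in S$ such that $x$ lies on a $y$–$z$ geodesic or $y$ lies on an $x$–$z$ geodesic. A vertex $u$ is maximally distant from $v$ if $d(u,v)\ge d(w,v)$ for every neighbor $w$ of $u$; $u,v$ are mutually maximally distant (MMD) if each is maximally distant from the other. The strong resolving graph $G_{\rm SR}$ has vertex set $\{x: x\text{ is MMD with some }y\}$ and edges exactly the MMD pairs. The Maker–Breaker strong resolving game on $G$: Maker and Breaker alternately select a not-yet-chosen vertex of $G$; Maker wins if the vertices he selects contain a strong resolving set of $G$, Breaker wins otherwise. In the M-game Maker moves first, in the B-game Breaker moves first. $O_{\rm SR}(G)=\mathcal{M}$ if Maker has a winning strategy in both games, $\mathcal{B}$ if Breaker has a winning strategy in both, and $\mathcal{N}$ if the first player has a winning strategy in each. *)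

(* Defs.v *)
From mathcomp Require Import all_boot.
Set Implicit Arguments. Unset Strict Implicit. Unset Printing Implicit Defensive.

Section Graph.
Variable T : finType.
Variable e : rel T.

Definition simple_graph := symmetric e /\ irreflexive e.
Definition connected_graph := forall x y : T, connect e x y.

Fixpoint ball (n : nat) (x : T) : {set T} :=
  match n with
  | 0 => [set x]
  | n'.+1 => ball n' x :|: [set y | [exists z in ball n' x, e z y]]
  end.

(* shortest-path distance: least n with y in ball n x
   (for connected graphs some n <= #|T| works) *)
Definition dist (x y : T) : nat := find (fun n => y \in ball n x) (iota 0 #|T|.+1).

Definition on_geodesic (y x z : T) : bool := dist y x + dist x z == dist y z.

Definition strong_resolving (S : {set T}) : bool :=
  [forall x, forall y, (x != y) ==>
     [exists z in S, on_geodesic y x z || on_geodesic x y z]].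

Definition max_distant (u v : T) : bool :=
  [forall w, e u w ==> (dist w v <= dist u v)].

Definition MMD (u v : T) : bool := (u != v) && max_distant u v && max_distant v u.

(* vertex set of the strong resolving graph G_SR; its edges are MMD pairs *)
Definition VSR : {set T} := [set x | [exists y, MMD x y]].

(* Maker-Breaker strong resolving game: M = Maker's vertices, B = Breaker's,
   mt = Maker to move. Game continues until all vertices are chosen; Maker
   wins iff his vertices contain (equivalently, since the property is
   monotone, form) a strong resolving set. [fuel] only bounds recursion. *)
Fixpoint maker_wins (fuel : nat) (M B : {set T}) (mt : bool) : bool :=
  match fuel with
  | 0 => strong_resolving M
  | f.+1 =>
    let F := ~: (M :|: B) in
    if F == set0 then strong_resolving M
    else if mt then [exists v in F, maker_wins f (v |: M) B false]
    else [forall v in F, maker_wins f M (v |: B) true]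
  end.

Definition maker_wins_M_game : bool := maker_wins #|T| set0 set0 true.
Definition maker_wins_B_game : bool := maker_wins #|T| set0 set0 false.

End Graph.

Inductive outcome := Out_M | Out_B | Out_N | Out_P.

(* O_SR(G): M = Maker wins both, B = Breaker wins both,
   N = first player wins each, P = second player wins each *)
Definition O_SR (T : finType) (e : rel T) : outcome :=
  match maker_wins_M_game e, maker_wins_B_game e with
  | true, true => Out_M
  | false, false => Out_B
  | true, false => Out_N
  | false, true => Out_P
  end.

(* The graph K_1 + (a K_2 u b K_1): vertex None is the K_1 joined to all;
   Some (inl (i, s)) are the endpoints of the i-th K_2; Some (inr j) are
   the b isolated vertices of aK_2 u bK_1. *)
Definition HV (a b : nat) := option (('I_a * bool) + 'I_b)%type.

Definition Hrel (a b : nat) : rel (HV a b) := fun u v =>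
  match u, v with
  | None, Some _ => true
  | Some _, None => true
  | Some (inl (i, s)), Some (inl (j, t)) => (i == j) && (s != t)
  | _, _ => false
  end.

Definition GSR_iso (T : finType) (e : rel T) (HT : finType) (h : rel HT) : Prop :=
  exists f : T -> HT,
    {in VSR e &, injective f} /\
    (forall y : HT, exists2 x, x \in VSR e & f x = y) /\
    {in VSR e &, forall u v, MMD e u v = h (f u) (f v)}.

Arguments Hrel a b : clear implicits.

(* Main.v *)
Require Import Defs.
From mathcomp Require Import all_boot.
From mathcomp Require Import zify.
Set Implicit Arguments. Unset Strict Implicit. Unset Printing Implicit Defensive.

Section Metric.
Variables (T : finType) (e : rel T).
Hypothesis esy : symmetric e.
Hypothesis conn : connected_graph e.

Lemma ball_sub n x : ball e n x \subset ball e n.+1 x.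
Proof. by rewrite /= subsetUl. Qed.

Lemma ball_mono m n x : m <= n -> ball e m x \subset ball e n x.
Proof.
elim: n => [|n IH]; first by rewrite leqn0 => /eqP ->.
rewrite leq_eqVlt => /orP [/eqP -> //| H].
exact: subset_trans (IH H) (ball_sub _ _).
Qed.

Lemma ball_step n x y z : y \in ball e n x -> e y z -> z \in ball e n.+1 x.
Proof.
move=> Hy Hyz; rewrite /= !inE; apply/orP; right.
by apply/existsP; exists y; rewrite Hy Hyz.
Qed.

Lemma ball_trans m n x y z :
  y \in ball e m x -> z \in ball e n y -> z \in ball e (m + n) x.
Proof.
move=> Hy; elim: n z => [|n IH] z.
  by rewrite /= inE => /eqP ->; rewrite addn0.
rewrite /= !inE => /orP [H | /existsP [w /andP [Hw ew]]].
  by rewrite addnS; apply: (subsetP (ball_sub _ _)); apply: IH.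
by rewrite addnS; apply: ball_step (IH w Hw) ew.
Qed.

Lemma ball_sym n x y : y \in ball e n x -> x \in ball e n y.
Proof.
elim: n y => [|n IH] y.
  by rewrite /= !inE => /eqP ->.
move=> Hy; case/setUP: Hy => [H | ]; last rewrite inE => /existsP [w /andP [Hw ew]].
  by apply: (subsetP (ball_sub _ _)); apply: IH.
have H1 : w \in ball e 1 y.
  by apply: (@ball_step 0 y y); rewrite ?inE // esy.
by have := ball_trans H1 (IH w Hw).
Qed.

Lemma path_ball x p : path e x p -> last x p \in ball e (size p) x.
Proof.
elim/last_ind: p => [|p z IH]; first by rewrite /= inE.
rewrite rcons_path last_rcons size_rcons => /andP [Hp Hz].
exact: ball_step (IH Hp) Hz.
Qed.

Lemma ball_conn x y : y \in ball e #|T| x.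
Proof.
have /connectP [p Hp ->] := conn x y.
case: (shortenP Hp) => p' Hp' Hu _.
apply: (subsetP (ball_mono _ _)); last exact: path_ball.
have E := card_uniqP Hu.
have := max_card (mem (x :: p')); rewrite [#|_|]E /=; lia.
Qed.

Lemma dist_ball x y n : (y \in ball e n x) = (dist e x y <= n).
Proof.
rewrite /dist.
set P := (fun n => y \in ball e n x).
have Hh : has P (iota 0 #|T|.+1).
  apply/hasP; exists #|T|; [by rewrite mem_iota add0n leq0n ltnSn | rewrite /P; apply: ball_conn].
have Hlt := Hh; rewrite has_find size_iota in Hlt.
apply/idP/idP => H.
  rewrite leqNgt; apply/negP => Hn.
  have := before_find 0 Hn.
  by rewrite nth_iota ?add0n ?(ltn_trans Hn Hlt) // => /negbT /negP; apply.
have := nth_find 0 Hh; rewrite nth_iota // add0n => Hf.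
exact: (subsetP (ball_mono _ H)).
Qed.

Lemma dist_in x y : y \in ball e (dist e x y) x.
Proof. by rewrite dist_ball. Qed.

Lemma dist0 x : dist e x x = 0.
Proof. by apply/eqP; rewrite -leqn0 -dist_ball /= inE. Qed.

Lemma dist_eq0 x y : dist e x y = 0 -> x = y.
Proof. move=> H; move: (dist_in x y); rewrite H => /set1P ->. done. Qed.

Lemma dist_sym x y : dist e x y = dist e y x.
Proof.
apply/eqP; rewrite eqn_leq -!dist_ball.
by apply/andP; split; apply: ball_sym; apply: dist_in.
Qed.

Lemma dist_tri x y z : dist e x z <= dist e x y + dist e y z.
Proof. by rewrite -dist_ball; apply: ball_trans; apply: dist_in. Qed.

Lemma dist_edge x y : e x y -> dist e x y <= 1.
Proof. by move=> H; rewrite -dist_ball; apply: (@ball_step 0 x x); rewrite ?inE. Qed.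

Lemma dist_back x z n : dist e x z = n.+1 -> exists2 w, e w z & dist e x w = n.
Proof.
move=> Hd.
have H1 := dist_in x z; rewrite Hd /= !inE in H1.
have H2 : z \notin ball e n x by rewrite dist_ball Hd ltnn.
move: H1; rewrite (negbTE H2) /= => /existsP [w /andP [Hw ew]].
exists w => //.
rewrite dist_ball in Hw.
have := dist_tri x w z; have := dist_edge ew.
move: Hd Hw; lia.
Qed.

Lemma dist_nb u w v : e u w -> dist e w v <= dist e u v + 1.
Proof.
move=> H; have := dist_tri w u v; have := dist_edge H; rewrite dist_sym; lia.
Qed.

Lemma extend p q : exists2 s, dist e s q = dist e s p + dist e p q & max_distant e s q.
Proof.
set A := [pred s | dist e s q == dist e s p + dist e p q].
have Ap : A p by rewrite /A /= dist0.
case: (arg_maxnP (fun s => dist e s q) Ap) => s /eqP As Hmax.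
exists s => //.
apply/forallP => w; apply/implyP => esw.
rewrite leqNgt; apply/negP => Hlt.
have t1 := dist_tri w p q.
have t2 : dist e w p <= dist e s p + 1.
  have := dist_tri w s p; have := dist_edge esw; rewrite dist_sym; lia.
have t3 := dist_nb q esw.
have Aw : A w by rewrite /A /=; apply/eqP; lia.
have := Hmax w Aw; lia.
Qed.

Lemma MMD_sym u v : MMD e u v = MMD e v u.
Proof.
by rewrite /MMD eq_sym; case: (max_distant e u v); case: (max_distant e v u); rewrite ?andbT ?andbF.
Qed.

Lemma cover_sr (M : {set T}) :
  (forall u v, MMD e u v -> (u \in M) || (v \in M)) -> strong_resolving e M.
Proof.
move=> Hc; apply/forallP => x; apply/forallP => y; apply/implyP => nxy.
have [w wA wmax] := extend x y.
have [t tA tmax] := extend y w.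
have wtmax : max_distant e w t.
  apply/forallP => w'; apply/implyP => ew.
  have := (forallP wmax w'); rewrite ew /= => h.
  have := dist_tri w' y t; rewrite (dist_sym y t) (dist_sym w t) tA (dist_sym y w).
  lia.
have dxy : 0 < dist e x y.
  by rewrite lt0n; apply/negP => /eqP /dist_eq0 /eqP; rewrite (negbTE nxy).
have nwt : w != t.
  apply/negP => /eqP E; move: tA wA dxy; rewrite E dist0 (dist_sym y t); lia.
have : MMD e w t by rewrite /MMD nwt wtmax tmax.
move=> /Hc /orP [wM | tM]; apply/existsP.
  exists w; rewrite wM /=; apply/orP; left.
  by rewrite /on_geodesic (dist_sym y x) (dist_sym x w) (dist_sym y w) wA addnC.
exists t; rewrite tM /=; apply/orP; right.
rewrite /on_geodesic.
have := dist_tri t x w; have := dist_tri x y t.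
move: tA wA; rewrite (dist_sym t x) (dist_sym t y) (dist_sym w x) (dist_sym y w).
move=> tA wA h1 h2; apply/eqP; lia.
Qed.

Lemma notgeo u v z : max_distant e u v -> z != u ->
  dist e v u + dist e u z != dist e v z.
Proof.
move=> Hm nzu.
case Ed: (dist e z u) => [|k].
  by move/dist_eq0: Ed => /eqP; rewrite (negbTE nzu).
have [w ewu Hw] := dist_back Ed.
have := (forallP Hm w); rewrite esy ewu /= => h.
have := dist_tri v w z.
rewrite (dist_sym v w) (dist_sym w z) Hw (dist_sym u z) Ed (dist_sym v u).
move=> h2; apply/eqP; lia.
Qed.

Lemma broken (M : {set T}) u v : MMD e u v -> u \notin M -> v \notin M ->
  ~~ strong_resolving e M.
Proof.
move=> H uM vM; apply/negP => /forallP /(_ u) /forallP /(_ v).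
move: H; rewrite /MMD => /andP [/andP [nuv muv] mvu].
rewrite nuv /= => /existsP [z /andP [zM /orP [g|g]]].
  have nzu : z != u by apply/negP => /eqP E; rewrite -E zM in uM.
  by move: g; rewrite /on_geodesic (negbTE (notgeo muv nzu)).
have nzv : z != v by apply/negP => /eqP E; rewrite -E zM in vM.
by move: g; rewrite /on_geodesic (negbTE (notgeo mvu nzv)).
Qed.

End Metric.

Section Game.
Variables (T : finType) (e : rel T).
Hypothesis esy : symmetric e.
Hypothesis conn : connected_graph e.
Variable c : T.
Hypothesis U : forall v w1 w2, v != c -> w1 != c -> w2 != c ->
  MMD e v w1 -> MMD e v w2 -> w1 = w2.

Definition Inv (M B : {set T}) := forall u v, MMD e u v -> u \in B -> v \in M.

Lemma final (M B : {set T}) : ~:(M :|: B) = set0 -> Inv M B -> strong_resolving e M.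
Proof.
move=> F0 HI; apply: cover_sr => // u v H.
case uM: (u \in M) => //=.
have : u \notin ~:(M :|: B) by rewrite F0 inE.
rewrite !inE uM /= negbK => uB.
exact: HI H uB.
Qed.

Lemma Inv_mono M B w : Inv M B -> Inv (w |: M) B.
Proof. by move=> H u v Huv uB; rewrite inE (H u v Huv uB) orbT. Qed.

Lemma cardF (X : {set T}) v : v \in ~: X -> #|~: (v |: X)| = #|~: X|.-1.
Proof.
move=> vX; rewrite (cardsD1 v (~: X)) vX /= add0n.
apply: eq_card => z; rewrite !inE negb_or; by case: (z == v).
Qed.

Lemma cardFM (M B : {set T}) v : v \in ~:(M :|: B) ->
  #|~: ((v |: M) :|: B)| = #|~:(M :|: B)|.-1.
Proof. by move=> H; rewrite -setUA cardF. Qed.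

Lemma cardFB (M B : {set T}) v : v \in ~:(M :|: B) ->
  #|~: (M :|: (v |: B))| = #|~:(M :|: B)|.-1.
Proof. by move=> H; rewrite setUCA cardF. Qed.

Lemma maker_resp (M B : {set T}) v : c \in M -> Inv M B -> v \in ~:(M :|: B) ->
  (~:(M :|: (v |: B)) = set0 -> Inv M (v |: B)) /\
  (~:(M :|: (v |: B)) != set0 ->
     exists2 w, w \in ~:(M :|: (v |: B)) & Inv (w |: M) (v |: B)).
Proof.
move=> cM HI vF.
have vM : v \notin M by move: vF; rewrite !inE negb_or => /andP [].
have vB : v \notin B by move: vF; rewrite !inE negb_or => /andP [].
have vc : v != c by apply/negP => /eqP E; rewrite E cM in vM.
case: (pickP [pred w | MMD e v w && (w \notin M)]) => [w0 /andP [Hvw0 w0M] | none].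
  have w0c : w0 != c by apply/negP => /eqP E; rewrite E cM in w0M.
  have w0B : w0 \notin B.
    apply/negP => w0B; have := HI w0 v; rewrite MMD_sym Hvw0 w0B => /(_ isT isT).
    by rewrite (negbTE vM).
  have w0v : w0 != v by move: Hvw0; rewrite /MMD eq_sym => /andP [/andP []].
  have w0F : w0 \in ~:(M :|: (v |: B)).
    by rewrite !inE negb_or (negbTE w0M) (negbTE w0v) (negbTE w0B).
  split; first by move=> F0; move: w0F; rewrite F0 inE.
  move=> _; exists w0 => // u v' Huv; move=> /setU1P [Eu | uB].
    rewrite Eu in Huv; apply/setU1P.
    case v'M: (v' \in M); first by right.
    have v'c : v' != c by apply/negP => /eqP E; rewrite E cM in v'M.
    by left; apply: (U vc v'c w0c Huv Hvw0).
  by apply/setU1P; right; apply: HI Huv uB.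
have HI' : Inv M (v |: B).
  move=> u v' Huv; move=> /setU1P [Eu | uB]; last exact: HI Huv uB.
  rewrite Eu in Huv; have := none v'; rewrite /= Huv /=.
  by move/negbFE.
split => // /set0Pn [w wF]; exists w => //; exact: Inv_mono.
Qed.

Lemma maker_game n :
  (forall M B, #|~:(M :|: B)| <= n -> c \in M -> Inv M B -> maker_wins e n M B false) /\
  (forall M B, #|~:(M :|: B)| <= n -> c \in M ->
     (~:(M :|: B) = set0 -> Inv M B) ->
     (~:(M :|: B) != set0 -> exists2 w, w \in ~:(M :|: B) & Inv (w |: M) B) ->
     maker_wins e n M B true).
Proof.
elim: n => [|n [IHb IHm]].
  split => M B Hc cM.
    by move=> HI; apply: (@final M B) => //; apply: cards0_eq; move: Hc; rewrite leqn0 => /eqP.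
  move=> HI _; have F0 : ~:(M :|: B) = set0 by apply: cards0_eq; move: Hc; rewrite leqn0 => /eqP.
  by apply: (@final M B) => //; apply: HI.
split => M B Hc cM.
  move=> HI /=; case: eqP => [F0 | /eqP Fn0]; first exact: (@final M B).
  apply/forallP => v; apply/implyP => vF.
  have [h1 h2] := maker_resp cM HI vF.
  apply: IHm => //; first by rewrite cardFB //; lia.
move=> h1 h2 /=; case: eqP => [F0 | /eqP Fn0]; first by apply: (@final M B) => //; apply: h1.
have [w wF HI] := h2 Fn0.
apply/existsP; exists w; rewrite wF /=.
apply: IHb => //; first by rewrite cardFM //; lia.
by rewrite inE cM orbT.
Qed.

Lemma breaker_game u w n (M B : {set T}) mt :
  MMD e u w -> u \in B -> w \in B -> u \notin M -> w \notin M ->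
  ~~ maker_wins e n M B mt.
Proof.
move=> Huw; elim: n M B mt => [|n IH] M B mt uB wB uM wM.
  exact: broken Huw uM wM.
rewrite /=; case: eqP => [_ | /eqP Fn0]; first exact: broken Huw uM wM.
case: mt.
  apply/negP => /existsP [x /andP [xF H]].
  have xB : x \notin B by move: xF; rewrite !inE negb_or => /andP [].
  have xu : x != u by apply/negP => /eqP E; rewrite E uB in xB.
  have xw : x != w by apply/negP => /eqP E; rewrite E wB in xB.
  move: H; apply/negP; apply: IH => //.
    by rewrite !inE negb_or uM andbT eq_sym.
  by rewrite !inE negb_or wM andbT eq_sym.
rewrite negb_forall; have /set0Pn [x xF] := Fn0.
apply/existsP; exists x; rewrite negb_imply xF /=.
by apply: IH; rewrite // inE ?uB ?wB orbT.
Qed.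

End Game.

Lemma MMD_VSR (T : finType) (e : rel T) u v : MMD e u v -> u \in VSR e.
Proof. by move=> H; rewrite inE; apply/existsP; exists v. Qed.

Theorem mainTheorem10 (T : finType) (e : rel T) (a b : nat) :
  simple_graph e -> connected_graph e ->
  ((1 <= a)%N \/ (a = 0 /\ (2 <= b)%N)) ->
  GSR_iso e (Hrel a b) ->
  O_SR e = Out_N.
Proof.
move=> [esy _] conn Hab [f [finj [fsurj fhom]]].
have [c cV fc] := fsurj None.
have fne : forall x, x \in VSR e -> x != c -> f x != None.
  move=> x xV xc; apply/negP => /eqP E.
  by move: xc; rewrite (finj x c xV cV) ?E ?fc ?eqxx.
have U : forall v w1 w2, v != c -> w1 != c -> w2 != c ->
    MMD e v w1 -> MMD e v w2 -> w1 = w2.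
  move=> v w1 w2 vc w1c w2c H1 H2.
  have vV := MMD_VSR H1.
  have w1V : w1 \in VSR e by apply: (MMD_VSR (v := v)); rewrite MMD_sym.
  have w2V : w2 \in VSR e by apply: (MMD_VSR (v := v)); rewrite MMD_sym.
  have h1 := fhom v w1 vV w1V; have h2 := fhom v w2 vV w2V.
  rewrite H1 in h1; rewrite H2 in h2.
  apply: finj => //.
  move: (fne v vV vc) (fne w1 w1V w1c) (fne w2 w2V w2c) h1 h2.
  case: (f v) => [[[i s]|j]|] //; case: (f w1) => [[[i1 s1]|j1]|] //;
    case: (f w2) => [[[i2 s2]|j2]|] //.
  move=> _ _ _ /esym /andP [/eqP <- ns1] /esym /andP [/eqP <- ns2].
  by move: ns1 ns2; case: s; case: s1; case: s2.
have [y1 [y2 [y1n [y2n y12]]]] : exists y1 y2 : HV a b,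
    y1 != None /\ y2 != None /\ y1 != y2.
  case: Hab => [a1 | [_ b2]].
    exists (Some (inl (Ordinal a1, false))), (Some (inl (Ordinal a1, true))).
    by [].
  have b0 : 0 < b by lia.
  have b1 : 1 < b by lia.
  by exists (Some (inr (Ordinal b0))), (Some (inr (Ordinal b1))).
have [w1 w1V fw1] := fsurj y1.
have [w2 w2V fw2] := fsurj y2.
have w1c : w1 != c by apply/negP => /eqP E; move: y1n; rewrite -fw1 E fc.
have w2c : w2 != c by apply/negP => /eqP E; move: y2n; rewrite -fw2 E fc.
have w12 : w1 != w2 by apply/negP => /eqP E; move: y12; rewrite -fw1 -fw2 E eqxx.
have MMDc : forall w, w \in VSR e -> w != c -> MMD e c w.
  move=> w wV wc; rewrite (fhom c w cV wV) fc.
  by move: (fne w wV wc); case: (f w).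
have T3 : 3 <= #|T|.
  have : #|c |: [set w1; w2]| <= #|T| by apply: max_card.
  rewrite cardsU1 cards2 w12 !inE negb_or eq_sym w1c eq_sym w2c /=.
  done.
rewrite /O_SR /maker_wins_M_game /maker_wins_B_game.
have -> : maker_wins e #|T| set0 set0 true.
  case ET: #|T| => [|n]; first by lia.
  rewrite /=.
  have cF : c \in ~: (set0 :|: set0) by rewrite !inE.
  case: eqP => [F0 | _]; first by move: cF; rewrite F0 inE.
  apply/existsP; exists c; rewrite cF /=.
  have := (maker_game esy conn U n).1 (c |: set0) set0; apply => //.
  - by rewrite cardFM // setU0 setC0 cardsT ET.
  - exact: setU11.
  - by move=> u v _; rewrite inE.
have -> : maker_wins e #|T| set0 set0 false = false.
  apply/negbTE.
  case ET: #|T| => [|[|[|n]]]; try lia.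
  rewrite /=.
  have cF : c \in ~: (set0 :|: set0) by rewrite !inE.
  case: eqP => [F0 | _]; first by move: cF; rewrite F0 inE.
  rewrite negb_forall; apply/existsP; exists c; rewrite negb_imply cF /=.
  have w1F : w1 \in ~: (set0 :|: (c |: set0)) by rewrite !inE (negbTE w1c).
  case: eqP => [F0 | _]; first by move: w1F; rewrite F0 inE.
  apply/negP => /existsP [x /andP [xF]].
  set w := if w1 == x then w2 else w1.
  have wc : w != c by rewrite /w; case: ifP.
  have wx : w != x.
    rewrite /w; case: ifP => [/eqP <- | /negbT] //; by rewrite eq_sym.
  have wV : w \in VSR e by rewrite /w; case: ifP.
  have wF : w \in ~: ((x |: set0) :|: (c |: set0)) by rewrite !inE negb_or (negbTE wx) (negbTE wc).
  rewrite /=; case: eqP => [F0 | _]; first by move: wF; rewrite F0 inE.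
  move=> /forallP /(_ w); rewrite wF /=; apply/negP.
  apply: (@breaker_game _ _ esy conn c w n (x |: set0) (w |: (c |: set0)) true (MMDc w wV wc)).
  - by rewrite !inE eqxx orbT.
  - by rewrite !inE eqxx.
  - by rewrite !inE orbF; apply/negP => /eqP E; move: xF; rewrite -E !inE eqxx /= ?orbT.
  - by rewrite !inE orbF.
by [].
Qed.
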